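(* Let $D$ be an integral domain, $\mathcal{T}$ a finite multiset of elements of $D$, and $f=\prod_{r\in\mathcal{T}}(x-r)$ (with multiplicities). If $Q$ is a non-zero prime ideal of $D$, then $\mathsf{d}(f)\subseteq Q$ if and only if $\mathcal{T}$ contains a complete system of residues modulo $Q$. Furthermore, suppose $D$ is a Dedekind domain, $Q$ is a non-zero prime ideal of $D$, and $\mathcal{T}=\mathcal{T}_0\uplus\mathcal{T}_1\uplus\cdots\uplus\mathcal{T}_e$ (multiset disjoint union) such that: (1) for all $1\le i\le e$, $\mathcal{T}_i$ is a complete system of residues modulo $Q$, and the respective representatives of the same residue class modulo $Q$ in the different $\mathcal{T}_i$ are congruent to each other modulo $Q^2$; (2) there exists $z\in D$ such that $s\not\equiv z \pmod Q$ for all $s\in\mathcal{T}_0$. Then $\mathsf{v}_Q(\mathsf{d}(f))=e$.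
   Context: For a polynomial $g$ with $g(D)\subseteq D$, the fixed divisor $\mathsf{d}(g)$ is the ideal of $D$ generated by $\{g(a)\mid a\in D\}$. For a Dedekind domain $D$ and a maximal ideal $Q$, $\mathsf{v}_Q$ is the $Q$-adic valuation; for a non-zero ideal $I$, $\mathsf{v}_Q(I)=\min\{\mathsf{v}_Q(a)\mid a\in I\}$ (the exponent of $Q$ in the prime factorization of $I$). For multisets $S,T$, $S\uplus T$ is the multiset with multiplicities added. *)

(* Defs.v *)
From HB Require Import structures.
From mathcomp Require Import all_boot all_order all_algebra.
From mathcomp Require Import fraction.
Set Implicit Arguments. Unset Strict Implicit. Unset Printing Implicit Defensive.
Import Order.TTheory GRing.Theory Num.Theory.
Local Open Scope ring_scope.

Section Ideals.
Variable D : idomainType.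

Definition is_ideal (I : D -> Prop) : Prop :=
  [/\ I 0, (forall x y, I x -> I y -> I (x + y)) & (forall a x, I x -> I (a * x))].

Definition prime_ideal (Q : D -> Prop) : Prop :=
  [/\ is_ideal Q, ~ Q 1 & (forall x y, Q (x * y) -> Q x \/ Q y)].

Definition nonzero_ideal (I : D -> Prop) : Prop := exists x, I x /\ x != 0.

Definition ideal_gen (S : D -> Prop) : D -> Prop :=
  fun x => exists s : seq (D * D),
    (forall p, p \in s -> S p.2) /\ x = \sum_(p <- s) p.1 * p.2.

Fixpoint ideal_pow (Q : D -> Prop) (n : nat) : D -> Prop :=
  match n with
  | 0 => fun _ => True
  | n'.+1 => ideal_gen (fun x => exists a b, ideal_pow Q n' a /\ Q b /\ x = a * b)
  end.

Definition fixed_divisor (g : {poly D}) : D -> Prop :=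
  ideal_gen (fun y => exists a : D, y = g.[a]).

Definition elt_val (Q : D -> Prop) (a : D) (n : nat) : Prop :=
  ideal_pow Q n a /\ ~ ideal_pow Q n.+1 a.

Definition ideal_val (Q : D -> Prop) (I : D -> Prop) (n : nat) : Prop :=
  (exists a, [/\ I a, a != 0 & elt_val Q a n]) /\
  (forall a m, I a -> a != 0 -> elt_val Q a m -> (n <= m)%N).

(* S (a multiset, as a seq) is a complete system of residues modulo Q:
   every x in D is congruent mod Q to exactly one entry of S (counted with
   multiplicity) *)
Definition complete_residues (Q : D -> Prop) (S : seq D) : Prop :=
  forall x : D, exists i : 'I_(size S),
    Q (x - nth 0 S i) /\ forall j : 'I_(size S), Q (x - nth 0 S j) -> j = i.

Definition submultiset (S T : seq D) : Prop := exists R, perm_eq T (S ++ R).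

Definition noetherian : Prop :=
  forall I, is_ideal I -> exists s : seq D,
    forall x, I x <-> ideal_gen (fun y => y \in s) x.

Definition dim_le1 : Prop :=
  forall P, prime_ideal P -> nonzero_ideal P ->
  forall J, is_ideal J -> (forall x, P x -> J x) ->
    (forall x, J x -> P x) \/ J 1.

Definition integrally_closed : Prop :=
  forall x : {fraction D},
    (exists p : {poly D}, p \is monic /\ (map_poly (@tofrac D) p).[x] = 0) ->
    exists d : D, x = tofrac d.

Definition dedekind : Prop := [/\ noetherian, dim_le1 & integrally_closed].

End Ideals.

(* Main.v *)
Require Import Defs.
From HB Require Import structures.
From mathcomp Require Import all_boot all_order all_algebra.
From mathcomp Require Import fraction.
From mathcomp Require Import ring.
From Stdlib Require Import Classical IndefiniteDescription.
From Stdlib Require ClassicalDescription.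
Import Order.TTheory GRing.Theory Num.Theory.
Local Open Scope ring_scope.

Module Helpers.
Set Implicit Arguments. Unset Strict Implicit. Unset Printing Implicit Defensive.
Local Notation "x %:F" := (@tofrac _ x).

Section Basics.
Variable D : idomainType.
Implicit Types (I Q S : D -> Prop) (x y a b : D).

Lemma gen_sub S x : S x -> ideal_gen S x.
Proof. by move=> Sx; exists [:: (1, x)]; split; [move=> p; rewrite inE => /eqP -> | rewrite big_seq1 mul1r]. Qed.

Lemma gen_ideal S : is_ideal (ideal_gen S).
Proof.
split.
- by exists [::]; split=> //; rewrite big_nil.
- move=> x y [s1 [H1 ->]] [s2 [H2 ->]]; exists (s1 ++ s2); split; last by rewrite big_cat.
  by move=> p; rewrite mem_cat => /orP[/H1|/H2].
- move=> a x [s [H ->]]; exists [seq (a * p.1, p.2) | p <- s]; split.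
  + by move=> p /mapP[q qs ->] /=; apply: H.
  + by rewrite big_map mulr_sumr; apply: eq_bigr => p _; rewrite mulrA.
Qed.

Lemma idl0 I : is_ideal I -> I 0. Proof. by case. Qed.
Lemma idlD I x y : is_ideal I -> I x -> I y -> I (x + y). Proof. by case=> _ h _; apply: h. Qed.
Lemma idlMl I a x : is_ideal I -> I x -> I (a * x). Proof. by case=> _ _ h; apply: h. Qed.
Lemma idlMr I a x : is_ideal I -> I x -> I (x * a). Proof. by move=> *; rewrite mulrC; apply: idlMl. Qed.
Lemma idlN I x : is_ideal I -> I x -> I (- x).
Proof. by move=> hI hx; rewrite -mulN1r; apply: idlMl. Qed.
Lemma idlB I x y : is_ideal I -> I x -> I y -> I (x - y).
Proof. by move=> hI hx hy; apply: idlD => //; apply: idlN. Qed.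
Lemma idlBr I x y : is_ideal I -> I (x - y) -> I (y - x).
Proof. by move=> hI h; rewrite -opprB; apply: idlN. Qed.
Lemma idlBt I x y z : is_ideal I -> I (x - y) -> I (y - z) -> I (x - z).
Proof. by move=> hI h1 h2; have := idlD hI h1 h2; rewrite addrA subrK. Qed.

Lemma idl_sum I (T : eqType) (l : seq T) F : is_ideal I -> (forall i, i \in l -> I (F i)) ->
  I (\sum_(i <- l) F i).
Proof.
move=> hI; elim: l => [|c l IH] H; first by rewrite big_nil; apply: idl0.
rewrite big_cons; apply: idlD => //; [apply: H; rewrite inE eqxx | apply: IH => i hi; apply: H; rewrite inE hi orbT] => //.
Qed.

Lemma gen_min S I : is_ideal I -> (forall x, S x -> I x) -> forall x, ideal_gen S x -> I x.
Proof.
move=> hI hS x [s [Hs ->]]; apply: idl_sum => // p ps.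
by apply: idlMl => //; apply: hS; apply: Hs.
Qed.

Lemma pow_ideal Q n : is_ideal Q -> is_ideal (ideal_pow Q n).
Proof. by case: n => [|n] hQ; [split | exact: gen_ideal]. Qed.

Lemma pow_S_mul Q n a b : ideal_pow Q n a -> Q b -> ideal_pow Q n.+1 (a * b).
Proof. by move=> ha hb; apply: gen_sub; exists a, b. Qed.

Lemma pow1 Q x : is_ideal Q -> ideal_pow Q 1 x <-> Q x.
Proof.
move=> hQ; split.
- by apply: gen_min => // y [a [b [_ [hb ->]]]]; apply: idlMl.
- by move=> hx; rewrite -[x]mul1r; apply: pow_S_mul.
Qed.

Lemma pow_decr Q n x : is_ideal Q -> ideal_pow Q n.+1 x -> ideal_pow Q n x.
Proof.
move=> hQ; elim: n x => [//|n IH] x.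
apply: gen_min; first exact: pow_ideal.
by move=> y [a [b [ha [hb ->]]]]; apply: pow_S_mul => //; apply: IH.
Qed.

Lemma pow_le Q m n x : is_ideal Q -> (m <= n)%N -> ideal_pow Q n x -> ideal_pow Q m x.
Proof.
move=> hQ /subnKC <-; elim: (n - m)%N => [|k IH]; first by rewrite addn0.
by rewrite addnS => h; apply: IH; apply: pow_decr.
Qed.

Lemma pow_X Q n p : Q p -> ideal_pow Q n (p ^+ n).
Proof. by move=> hp; elim: n => [//|n IH]; rewrite exprSr; apply: pow_S_mul. Qed.

Lemma pow_prod Q (T : eqType) (l : seq T) F : (forall i, i \in l -> Q (F i)) ->
  ideal_pow Q (size l) (\prod_(i <- l) F i).
Proof.
elim: l => [|c l IH] H; first by [].
rewrite big_cons mulrC; apply: pow_S_mul; [apply: IH => i hi|]; apply: H; rewrite inE ?hi ?orbT ?eqxx //.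
Qed.

Lemma prime_prod Q (T : eqType) (l : seq T) F : prime_ideal Q -> Q (\prod_(i <- l) F i) ->
  exists2 i, i \in l & Q (F i).
Proof.
case=> hQ h1 hp; elim: l => [|c l IH]; first by rewrite big_nil.
rewrite big_cons => /hp[h|/IH[i hi hq]]; [exists c; rewrite ?inE ?eqxx | exists i; rewrite ?inE ?hi ?orbT] => //.
Qed.

Lemma prod_in Q (T : eqType) (l : seq T) F i : is_ideal Q -> i \in l -> Q (F i) ->
  Q (\prod_(j <- l) F j).
Proof.
move=> hQ; elim: l => [//|c l IH]; rewrite inE => /orP[/eqP ->|hi] hq; rewrite big_cons.
- by apply: idlMr.
- by apply: idlMl => //; apply: IH.
Qed.

Lemma horner_f (T : seq D) a : (\prod_(r <- T) ('X - r%:P)).[a] = \prod_(r <- T) (a - r).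
Proof. by rewrite horner_prod; apply: eq_bigr => r _; rewrite hornerXsubC. Qed.

End Basics.


Section Part1.
Variable D : idomainType.
Variable Q : D -> Prop.
Hypothesis hQ : is_ideal Q.

Definition qb x : bool := if ClassicalDescription.excluded_middle_informative (Q x) then true else false.
Lemma qbP x : reflect (Q x) (qb x).
Proof. by rewrite /qb; case: ClassicalDescription.excluded_middle_informative => h; constructor. Qed.

Fixpoint sel (l : seq D) : seq D :=
  match l with
  | [::] => [::]
  | r :: l' => if has (fun r' => qb (r - r')) l' then sel l' else r :: sel l'
  end.

Lemma sel_sub l : subseq (sel l) l.
Proof.
elim: l => [//|r l IH] /=; case: ifP => _.
- by apply: subseq_trans IH (subseq_cons _ _).
- by rewrite eqxx.
Qed.

Lemma sel_cover l r : r \in l -> exists2 r', r' \in sel l & Q (r - r').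
Proof.
elim: l r => [//|c l IH] r; rewrite inE => /orP[/eqP ->|rl] /=.
- case: ifP => [/hasP[r'' r''l /qbP h]|_].
  + by have [r' H1 H2] := IH _ r''l; exists r' => //; apply: idlBt h H2.
  + by exists c; rewrite ?inE ?eqxx // subrr; apply: idl0.
- have [r' H1 H2] := IH _ rl; exists r' => //; case: ifP => // _.
  by rewrite inE H1 orbT.
Qed.

Lemma sel_sep l (i j : nat) : (i < size (sel l))%N -> (j < size (sel l))%N ->
  Q (nth 0 (sel l) i - nth 0 (sel l) j) -> i = j.
Proof.
elim: l i j => [//|c l IH] i j /=; case: ifP => [_|hn]; first exact: IH.
have nin k : (k < size (sel l))%N -> ~ Q (c - nth 0 (sel l) k).
  move=> hk hq; move/negbT: hn => /hasPn/(_ (nth 0 (sel l) k)).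
  have -> : nth 0 (sel l) k \in l by apply: (mem_subseq (sel_sub l)); apply: mem_nth.
  by move=> /(_ isT)/qbP.
case: i => [|i]; case: j => [|j] //= hi hj.
- by move=> h; exfalso; apply: (nin j hj).
- by move=> h; exfalso; apply: (nin i hi); apply: idlBr.
- by move=> h; congr S; apply: IH.
Qed.

End Part1.

Section Part1main.
Variable D : idomainType.


Lemma part1 (T : seq D) (Q : D -> Prop) :
     prime_ideal Q -> nonzero_ideal Q ->
     ((forall x, fixed_divisor (\prod_(r <- T) ('X - r%:P)) x -> Q x) <->
      exists S, submultiset S T /\ complete_residues Q S).
Proof.
move=> hP _; have hQ : is_ideal Q by case: hP.
split.
- move=> H; exists (sel Q T); split.
    by have [s3 hs3] := perm_to_subseq (sel_sub Q T); exists s3.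
  move=> a.
  have /(prime_prod hP)[r rT hr] : Q (\prod_(r <- T) (a - r)).
    by apply: H; apply: gen_sub; exists a; rewrite horner_f.
  have [r' r'S hr'] := sel_cover hQ rT.
  have hi : (index r' (sel Q T) < size (sel Q T))%N by rewrite index_mem.
  exists (Ordinal hi); split; first by rewrite /= nth_index //; exact: (idlBt hQ hr hr').
  move=> j hj; apply: ord_inj => /=; symmetry; apply: (sel_sep hQ hi (ltn_ord j)).
  rewrite nth_index //; apply: (idlBt hQ) (idlBr hQ (idlBt hQ hr hr')) hj.
- move=> [S [[R hR] hc]]; apply: gen_min; first exact: hQ.
  move=> y [a ->]; rewrite horner_f.
  have [i [hi _]] := hc a.
  apply: (prod_in (i := nth 0 S i)) => //.
  by rewrite (perm_mem hR) mem_cat mem_nth.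
Qed.

End Part1main.


Section Gen.
Variable D : idomainType.

Lemma gen_coef (s : seq D) x : ideal_gen (fun y => y \in s) x ->
  exists c : 'I_(size s) -> D, x = \sum_j c j * s`_j.
Proof.
move=> [l [H ->]]; elim: l H => [|p l IH] H.
  by exists (fun _ => 0); rewrite big_nil big1 // => j _; rewrite mul0r.
rewrite big_cons.
have [|c ->] := IH; first by move=> q ql; apply: H; rewrite inE ql orbT.
have ps : p.2 \in s by apply: H; rewrite inE eqxx.
have hk : (index p.2 s < size s)%N by rewrite index_mem.
pose k := Ordinal hk.
exists (fun j => c j + (if j == k then p.1 else 0)).
transitivity (\sum_j (c j * s`_j + (if j == k then p.1 else 0) * s`_j)); last first.
  by apply: eq_bigr => j _; rewrite mulrDl.
rewrite big_split /= addrC; congr (_ + _).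
rewrite (bigD1 k) //= eqxx /= nth_index // big1 ?addr0 // => j /negbTE ->.
by rewrite mul0r.
Qed.

Lemma noeth_max (F : D -> D -> Prop) (X : D -> Prop) x0 : noetherian D ->
  (forall x, X x -> is_ideal (F x)) -> X x0 ->
  exists b, X b /\ forall x, X x -> (forall d, F b d -> F x d) -> forall d, F x d -> F b d.
Proof.
move=> hN hI hX0; apply: NNPP => hno.
have H : forall b, exists x, X b -> [/\ X x, (forall d, F b d -> F x d) & exists d, F x d /\ ~ F b d].
  move=> b; case: (classic (X b)) => Xb; last by exists b.
  apply: NNPP => hn; apply: hno; exists b; split => // x Xx sub d Fxd.
  apply: NNPP => nF; apply: hn; exists x => _; split => //; exists d; split => //.
pose g b := proj1_sig (constructive_indefinite_description _ (H b)).
have gP b : X b -> [/\ X (g b), (forall d, F b d -> F (g b) d) & exists d, F (g b) d /\ ~ F b d].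
  exact: (proj2_sig (constructive_indefinite_description _ (H b))).
pose xs n := iter n g x0.
have Xs n : X (xs n) by elim: n => [//|n IH]; rewrite /xs /=; case: (gP _ IH).
have mono m n : (m <= n)%N -> forall d, F (xs m) d -> F (xs n) d.
  move=> /subnKC <-; elim: (n - m)%N => [|k IH] d; first by rewrite addn0.
  by rewrite addnS => /IH; rewrite /xs /=; case: (gP _ (Xs (m + k)%N)) => _ h _; apply: h.
pose U d := exists n, F (xs n) d.
have hU : is_ideal U.
  split.
  - by exists 0%N; case: (hI _ (Xs 0%N)).
  - move=> x y [m hx] [n hy]; exists (maxn m n); apply: idlD; first exact: hI.
    + by apply: (mono m) => //; rewrite leq_maxl.
    + by apply: (mono n) => //; rewrite leq_maxr.
  - by move=> a x [n hx]; exists n; apply: idlMl => //; apply: hI.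
have [s hs] := hN U hU.
have Us : forall y, y \in s -> U y by move=> y ys; apply/hs; apply: gen_sub.
have [N hN'] : exists N, forall y, y \in s -> F (xs N) y.
  elim: s {hs} Us => [|y l IH] Us; first by exists 0%N.
  have [|N1 h1] := IH; first by move=> z zl; apply: Us; rewrite inE zl orbT.
  have [|N2 h2] := Us y; first by rewrite inE eqxx.
  exists (maxn N1 N2) => z; rewrite inE => /orP[/eqP ->|zl].
  - by apply: (mono N2) => //; rewrite leq_maxr.
  - by apply: (mono N1) => //; rewrite ?leq_maxl //; apply: h1.
have sub : forall d, U d -> F (xs N) d.
  move=> d /hs; apply: gen_min => //; exact: hI.
have [_ _ [d [hd nd]]] := gP _ (Xs N).
by apply: nd; apply: sub; exists N.+1.
Qed.

Lemma det_trick (s : seq D) (a b : D) : integrally_closed D -> a != 0 ->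
  has (fun g => g != 0) s ->
  (forall i : 'I_(size s), exists c : 'I_(size s) -> D, b * s`_i = a * \sum_j c j * s`_j) ->
  exists d, b = a * d.
Proof.
move=> hic a0 hs H.
pose cf i := proj1_sig (constructive_indefinite_description _ (H i)).
have cfP (i : 'I_(size s)) : b * s`_i = a * \sum_j cf i j * s`_j.
  exact: (proj2_sig (constructive_indefinite_description _ (H i))).
pose C : 'M[D]_(size s) := \matrix_(j < size s, i < size s) cf i j.
pose y : {fraction D} := b%:F / a%:F.
have a0' : a%:F != 0 by rewrite tofrac_eq0.
have : eigenvalue (map_mx (@tofrac D) C) y.
  apply/eigenvalueP; exists (\row_j (s`_j)%:F).
  - apply/rowP => i; rewrite !mxE.
    transitivity ((\sum_j cf i j * s`_j)%:F).
      rewrite rmorph_sum; apply: eq_bigr => j _; rewrite !mxE mulrC rmorphM //.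
    rewrite /y mulrAC -rmorphM cfP rmorphM mulrC mulrA mulVf // mul1r //.
  - move: hs => /hasP[g gs g0].
    have hk : (index g s < size s)%N by rewrite index_mem.
    apply/eqP => /rowP/(_ (Ordinal hk)); rewrite !mxE /= nth_index //.
    by move/eqP; rewrite tofrac_eq0 (negbTE g0).
rewrite eigenvalue_root_char -map_char_poly => /rootP hr.
have [|d hd] := hic y; first by exists (char_poly C); split; [exact: char_poly_monic | exact: hr].
exists d; apply/eqP; rewrite -tofrac_eq tofracM -hd /y mulrC divfK //.
Qed.

End Gen.


Section Ded.
Variable D : idomainType.
Variable Q : D -> Prop.
Hypotheses (hP : prime_ideal Q) (hnz : nonzero_ideal Q) (hded : dedekind D).

Lemma hQ : is_ideal Q. Proof. by case: hP. Qed.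
Lemma hQ1 : ~ Q 1. Proof. by case: hP. Qed.
Lemma hQp x y : Q (x * y) -> Q x \/ Q y. Proof. by case: hP => _ _; apply. Qed.
Lemma notQM x y : ~ Q x -> ~ Q y -> ~ Q (x * y).
Proof. by move=> nx ny /hQp[]. Qed.

Lemma uniformizer : exists pi, Q pi /\ forall q, Q q -> exists u d, ~ Q u /\ u * q = pi * d.
Proof.
have [a [aQ a0]] := hnz.
case: hded => hN hdim hic.
pose X b := ~ exists t c, ~ Q t /\ t * b = a * c.
pose F b d := exists t c, ~ Q t /\ t * d * b = a * c.
have FI b : is_ideal (F b).
  split.
  - by exists 1, 0; split; [exact: hQ1 | rewrite mul1r mul0r mulr0].
  - move=> x y [t1 [c1 [n1 e1]]] [t2 [c2 [n2 e2]]]; exists (t1 * t2), (t2 * c1 + t1 * c2).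
    split; first exact: notQM.
    have -> : t1 * t2 * (x + y) * b = t2 * (t1 * x * b) + t1 * (t2 * y * b) by ring.
    by rewrite e1 e2; ring.
  - move=> a' x [t [c [n e]]]; exists t, (a' * c); split => //.
    have -> : t * (a' * x) * b = a' * (t * x * b) by ring.
    by rewrite e; ring.
have X1 : X 1.
  by move=> [t [c [nt e]]]; apply: nt; rewrite -[t]mulr1 e; exact: (idlMr c hQ aQ).
have [b [Xb bmax]] := noeth_max (F := F) (X := X) hN (fun b _ => FI b) X1.
have PQ d : F b d -> Q d.
  move=> [t [c [nt e]]]; apply: NNPP => nd; apply: Xb; exists (t * d), c; split => //.
  exact: notQM.
have Pprime : prime_ideal (F b).
  split; first exact: FI.
  - by move/PQ; exact: hQ1.
  - move=> x y Fxy; case: (classic (F b x)) => [|nx]; [by left | right].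
    have Xbx : X (b * x).
      move=> [t [c [nt e]]]; apply: nx; exists t, c; split => //.
      by rewrite -e; ring.
    have sub d : F b d -> F (b * x) d.
      move=> [t [c [nt e]]]; exists t, (c * x); split => //.
      by rewrite mulrA e; ring.
    apply: (bmax _ Xbx sub).
    move: Fxy => [t [c [nt e]]]; exists t, c; split => //.
    by rewrite -e; ring.
have Pnz : nonzero_ideal (F b).
  by exists a; split => //; exists 1, b; split; [exact: hQ1 | ring].
have QP : forall x, Q x -> F b x.
  by case: (hdim _ Pprime Pnz Q hQ PQ) => // /hQ1.
have [gens hgens] := hN Q hQ.
have gQ g : g \in gens -> Q g by move=> gs; apply/hgens; apply: gen_sub.
have [t [nt ht]] : exists t, ~ Q t /\ forall g, g \in gens -> exists c, t * g * b = a * c.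
  elim: gens {hgens} gQ => [|g l IH] gQ'.
    by exists 1; split => //; exact: hQ1.
  have [|t1 [n1 h1]] := IH; first by move=> g' g'l; apply: gQ'; rewrite inE g'l orbT.
  have [|t2 [c2 [n2 e2]]] := QP g; first by apply: gQ'; rewrite inE eqxx.
  exists (t1 * t2); split; first exact: notQM.
  move=> g'; rewrite inE => /orP[/eqP ->|g'l].
  - by exists (t1 * c2); rewrite -[RHS]mulrCA -e2; ring.
  - by have [c e] := h1 _ g'l; exists (t2 * c); rewrite -[RHS]mulrCA -e; ring.
have hall : forall q, Q q -> exists c, t * q * b = a * c.
  move=> q /hgens; apply: (gen_min (I := fun q => exists c, t * q * b = a * c)); last by move=> g /ht.
  split.
  - by exists 0; rewrite mulr0 mul0r mulr0.
  - move=> x y [c1 e1] [c2 e2]; exists (c1 + c2).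
    have -> : t * (x + y) * b = t * x * b + t * y * b by ring.
    by rewrite e1 e2; ring.
  - move=> a' x [c e]; exists (a' * c).
    have -> : t * (a' * x) * b = a' * (t * x * b) by ring.
    by rewrite e; ring.
pose b' := t * b.
have nb' : ~ exists t' c, ~ Q t' /\ t' * b' = a * c.
  move=> [t' [c [nt' e]]]; apply: Xb; exists (t' * t), c; split; first exact: notQM.
  by rewrite -e /b'; ring.
case: (classic (exists q0 u, [/\ Q q0, ~ Q u & b' * q0 = a * u])).
- move=> [q0 [u [q0Q nu e0]]]; exists q0; split => // q qQ.
  have [d ed] := hall q qQ; exists u, d; split => //.
  apply: (mulfI a0); rewrite mulrA -e0 (_ : a * (q0 * d) = q0 * (a * d)); last by ring.
  by rewrite -ed /b'; ring.
- move=> nex; exfalso; apply: nb'.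
  have hs : has (fun g => g != 0) gens.
    apply: contraT => /hasPn h0; move: a0; move: aQ => /hgens [l [hl ->]].
    rewrite big1_seq ?eqxx // => p /andP[_ pl].
    by have /negPn/eqP -> := h0 _ (hl _ pl); rewrite mulr0.
  have [|d ed] := det_trick (s := gens) (b := b') hic a0 hs.
    move=> i; have gi : gens`_i \in gens by apply: mem_nth.
    have [c ec] := hall _ (gQ _ gi).
    have cQ : Q c.
      apply: NNPP => nc; apply: nex; exists gens`_i, c; split => //; first exact: gQ.
      by rewrite -ec /b'; ring.
    have [cf ecf] := gen_coef (proj1 (hgens c) cQ).
    by exists cf; rewrite -ecf -ec /b'; ring.
  by exists 1, d; split; [exact: hQ1 | rewrite mul1r].
Qed.

Lemma maxQ s : ~ Q s -> exists u q, Q q /\ u * s + q = 1.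
Proof.
move=> ns; case: hded => _ hdim _.
pose J x := exists q d, Q q /\ x = q + d * s.
have hJ : is_ideal J.
  split.
  - by exists 0, 0; split; [exact: idl0 hQ | rewrite mul0r addr0].
  - move=> x y [q1 [d1 [h1 ->]]] [q2 [d2 [h2 ->]]]; exists (q1 + q2), (d1 + d2).
    by split; [exact: idlD hQ h1 h2 | ring].
  - move=> a x [q [d [h ->]]]; exists (a * q), (a * d).
    by split; [exact: idlMl hQ h | ring].
have sub : forall x, Q x -> J x by move=> x hx; exists x, 0; rewrite mul0r addr0.
case: (hdim Q hP hnz J hJ sub) => [h|[q [d [hq e]]]].
- by exfalso; apply: ns; apply: h; exists 0, 1; split; [exact: idl0 hQ | rewrite mul1r add0r].
- by exists d, q; split => //; rewrite addrC -e.
Qed.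

Lemma primary n s x : ~ Q s -> ideal_pow Q n (s * x) -> ideal_pow Q n x.
Proof.
move=> ns hsx; have [u [q [qQ e]]] := maxQ ns.
have key : forall n, exists w r, ideal_pow Q n r /\ 1 = s * w + r.
  elim=> [|k [w [r [hr e']]]]; first by exists 0, 1; rewrite mulr0 add0r.
  exists (w * u * s + w * q + r * u), (r * q); split; first exact: pow_S_mul.
  transitivity ((s * w + r) * (u * s + q)); first by rewrite -e' e mulr1.
  ring.
have [w [r [hr e']]] := key n; have hI := pow_ideal n hQ.
rewrite -[x]mulr1 e' mulrDr; apply: (idlD hI).
- by rewrite mulrA [x * s]mulrC; exact: idlMr.
- exact: idlMl.
Qed.

Variable pi : D.
Hypotheses (piQ : Q pi) (hpi : forall q, Q q -> exists u d, ~ Q u /\ u * q = pi * d).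

Lemma pi0 : pi != 0.
Proof.
have [q [qQ q0]] := hnz; have [u [d [nu e]]] := hpi qQ.
apply/eqP => p0; move: e; rewrite p0 mul0r => /eqP; rewrite mulf_eq0 (negbTE q0) orbF.
by move/eqP => u0; apply: nu; rewrite u0; exact: idl0 hQ.
Qed.

Lemma pow_char n x : ideal_pow Q n x <-> exists u c, ~ Q u /\ u * x = pi ^+ n * c.
Proof.
split.
- elim: n x => [|n IH] x; first by exists 1, x; split; [exact: hQ1 | rewrite expr0 !mul1r].
  apply: (gen_min (I := fun x => exists u c, ~ Q u /\ u * x = pi ^+ n.+1 * c)).
  + split.
    * by exists 1, 0; split; [exact: hQ1 | rewrite !mulr0].
    * move=> y z [u1 [c1 [n1 e1]]] [u2 [c2 [n2 e2]]]; exists (u1 * u2), (u2 * c1 + u1 * c2).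
      split; first exact: notQM.
      have -> : u1 * u2 * (y + z) = u2 * (u1 * y) + u1 * (u2 * z) by ring.
      by rewrite e1 e2; ring.
    * move=> a y [u [c [nu e]]]; exists u, (a * c); split => //.
      have -> : u * (a * y) = a * (u * y) by ring.
      by rewrite e; ring.
  + move=> y [a [b [ha [hb ->]]]].
    have [u1 [c1 [n1 e1]]] := IH _ ha; have [u2 [c2 [n2 e2]]] := hpi hb.
    exists (u1 * u2), (c1 * c2); split; first exact: notQM.
    have -> : u1 * u2 * (a * b) = (u1 * a) * (u2 * b) by ring.
    by rewrite e1 e2 exprSr; ring.
- move=> [u [c [nu e]]]; apply: (primary nu); rewrite e.
  by apply: idlMr; [exact: pow_ideal hQ | exact: pow_X].
Qed.

Definition V x m := exists u c, [/\ ~ Q u, ~ Q c & u * x = pi ^+ m * c].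

Lemma val_char m x : (ideal_pow Q m x /\ ~ ideal_pow Q m.+1 x) <-> V x m.
Proof.
split.
- move=> [/pow_char[u [c [nu e]]] nx]; exists u, c; split => // cQ.
  apply: nx; have [u' [d [nu' e']]] := hpi cQ.
  apply/pow_char; exists (u' * u), d; split; first exact: notQM.
  by rewrite -mulrA e mulrCA e' exprSr; ring.
- move=> [u [c [nu nc e]]]; split; first by apply/pow_char; exists u, c.
  move/pow_char => [u' [c' [nu' e']]].
  have : pi ^+ m * (u' * c) = pi ^+ m * (pi * (u * c')).
    by rewrite mulrCA -e mulrCA e' exprSr; ring.
  move/(mulfI (expf_neq0 m pi0)) => e2.
  have : Q (u' * c) by rewrite e2; apply: idlMr piQ; exact: hQ.
  by move/hQp => [].
Qed.

Lemma V_mul x y m n : V x m -> V y n -> V (x * y) (m + n).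
Proof.
move=> [u1 [c1 [n1 n1' e1]]] [u2 [c2 [n2 n2' e2]]].
exists (u1 * u2), (c1 * c2); split; try exact: notQM.
have -> : u1 * u2 * (x * y) = (u1 * x) * (u2 * y) by ring.
by rewrite e1 e2 exprD; ring.
Qed.

Lemma V0 x : ~ Q x -> V x 0.
Proof. by move=> nx; exists 1, x; split; [exact: hQ1 | by [] | rewrite expr0 !mul1r]. Qed.

Lemma V1 x : Q x -> ~ ideal_pow Q 2 x -> V x 1.
Proof. by move=> hx nx; apply/val_char; split => //; apply/pow1 => //; exact: hQ. Qed.

Lemma V_nz x m : V x m -> x != 0.
Proof.
move=> [u [c [nu nc e]]]; apply/eqP => x0; move: e; rewrite x0 mulr0 => /esym/eqP.
rewrite mulf_eq0 (negbTE (expf_neq0 m pi0)) /= => /eqP c0; apply: nc; rewrite c0.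
exact: idl0 hQ.
Qed.

Lemma pi_not2 : ~ ideal_pow Q 2 pi.
Proof.
have : V pi 1 by exists 1, 1; split; [exact: hQ1 | exact: hQ1 | rewrite mul1r expr1 mulr1].
by move/val_char => [].
Qed.

Lemma V_prod (I : eqType) (l : seq I) F (m : I -> nat) :
  (forall i, i \in l -> V (F i) (m i)) -> V (\prod_(i <- l) F i) (\sum_(i <- l) m i)%N.
Proof.
elim: l => [|c l IH] H; first by rewrite !big_nil; apply: V0; exact: hQ1.
rewrite !big_cons; apply: V_mul; first by apply: H; rewrite inE eqxx.
by apply: IH => i il; apply: H; rewrite inE il orbT.
Qed.

Lemma part2_core (T T0 : seq D) (e : nat) (Ts : nat -> seq D) :
     perm_eq T (T0 ++ flatten [seq Ts i | i <- iota 1 e]) ->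
     (forall i, (1 <= i <= e)%N -> complete_residues Q (Ts i)) ->
     (forall i j s t, (1 <= i <= e)%N -> (1 <= j <= e)%N ->
        s \in Ts i -> t \in Ts j -> Q (s - t) -> ideal_pow Q 2 (s - t)) ->
     (exists z : D, forall s, s \in T0 -> ~ Q (s - z)) ->
     ideal_val Q (fixed_divisor (\prod_(r <- T) ('X - r%:P))) e.
Proof.
move=> hperm hcr hcross [z hz].
have fa a : (\prod_(r <- T) ('X - r%:P)).[a] =
    (\prod_(r <- T0) (a - r)) * \prod_(i <- iota 1 e) \prod_(s <- Ts i) (a - s).
  by rewrite horner_f (perm_big _ hperm) big_cat big_flatten big_map.
have ie i : i \in iota 1 e -> (1 <= i <= e)%N.
  by rewrite mem_iota => /andP[-> h]; rewrite -ltnS -[e.+1]add1n.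
have upper : forall x, fixed_divisor (\prod_(r <- T) ('X - r%:P)) x -> ideal_pow Q e x.
  apply: gen_min; first exact: pow_ideal hQ.
  move=> y [a ->]; rewrite fa; apply: idlMl; first exact: pow_ideal hQ.
  rewrite -[in X in ideal_pow _ X _](size_iota 1 e); apply: pow_prod => i /ie hi.
  have [j [hj _]] := hcr i hi a.
  by apply: (prod_in (i := nth 0 (Ts i) j)) => //; [exact: hQ | apply: mem_nth].
have [w [wz hw]] : exists w, Q (w - z) /\ forall i, (1 <= i <= e)%N -> forall s, s \in Ts i ->
    Q (w - s) -> ideal_pow Q 2 (w - s).
  case: e {hperm upper ie fa} hcr hcross => [|e] hcr hcross.
    by exists z; split; [rewrite subrr; exact: idl0 hQ | move=> i /andP[h1 h2]; have := leq_trans h1 h2].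
  have [j [hj _]] := hcr 1%N isT z.
  exists (nth 0 (Ts 1%N) j); split; first exact: idlBr hQ hj.
  move=> i hi s si hq; exact: (hcross 1%N i _ s isT hi (mem_nth 0 (ltn_ord j)) si hq).
pose a := w + pi.
have hQ' := hQ.
have VT0 : V (\prod_(r <- T0) (a - r)) 0.
  suff : V (\prod_(r <- T0) (a - r)) (\sum_(r <- T0) 0%N) by rewrite big1_eq.
  apply: V_prod => r rT0.
  apply: V0 => har; apply: (hz r rT0); apply: idlBr => //.
  have -> : z - r = (a - r) - (w - z) - pi by rewrite /a; ring.
  by apply: idlB => //; apply: idlB.
have VTs : forall i, i \in iota 1 e -> V (\prod_(s <- Ts i) (a - s)) 1.
  move=> i /ie hi; have [j [hj uj]] := hcr i hi a.
  rewrite (big_nth 0) big_mkord (bigD1 j) //=.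
  have -> : 1%N = (1 + 0)%N by [].
  apply: V_mul.
  - apply: V1 => // h2; apply: pi_not2.
    have hws : Q (w - nth 0 (Ts i) j).
      have -> : w - nth 0 (Ts i) j = (a - nth 0 (Ts i) j) - pi by rewrite /a; ring.
      exact: idlB.
    have h2' := hw i hi _ (mem_nth 0 (ltn_ord j)) hws.
    have -> : pi = (a - nth 0 (Ts i) j) - (w - nth 0 (Ts i) j) by rewrite /a; ring.
    by apply: idlB => //; exact: pow_ideal.
  - apply: (big_ind (fun x => V x 0)); first by apply: V0; exact: hQ1.
      by move=> x y hx hy; exact: (V_mul hx hy).
    by move=> k /negP kj; apply: V0 => hk; apply: kj; apply/eqP; apply: uj.
have Vf : V ((\prod_(r <- T) ('X - r%:P)).[a]) e.
  rewrite fa -[e]add0n; apply: V_mul => //.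
  by rewrite -[in X in V _ X](size_iota 1 e) -sum1_size; apply: V_prod.
split.
- exists (\prod_(r <- T) ('X - r%:P)).[a]; split.
  + by apply: gen_sub; exists a.
  + exact: V_nz Vf.
  + by apply/val_char.
- move=> x m hx x0 [_ nx]; rewrite leqNgt; apply/negP => me; apply: nx.
  by apply: (pow_le (n := e)) => //; apply: upper.
Qed.

End Ded.

End Helpers.
Import Helpers.

Theorem lemma3p2 (D : idomainType) :
  (forall (T : seq D) (Q : D -> Prop),
     prime_ideal Q -> nonzero_ideal Q ->
     ((forall x, fixed_divisor (\prod_(r <- T) ('X - r%:P)) x -> Q x) <->
      exists S, submultiset S T /\ complete_residues Q S)) /\
  (dedekind D ->
   forall (Q : D -> Prop) (T T0 : seq D) (e : nat) (Ts : nat -> seq D),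
     prime_ideal Q -> nonzero_ideal Q ->
     perm_eq T (T0 ++ flatten [seq Ts i | i <- iota 1 e]) ->
     (forall i, (1 <= i <= e)%N -> complete_residues Q (Ts i)) ->
     (forall i j s t, (1 <= i <= e)%N -> (1 <= j <= e)%N ->
        s \in Ts i -> t \in Ts j -> Q (s - t) -> ideal_pow Q 2 (s - t)) ->
     (exists z : D, forall s, s \in T0 -> ~ Q (s - z)) ->
     ideal_val Q (fixed_divisor (\prod_(r <- T) ('X - r%:P))) e).
Proof.
split; first by move=> T Q; exact: part1.
move=> hded Q T T0 e Ts hP hnz hperm hcr hcross hz.
have [pi [piQ hpi]] := uniformizer hP hnz hded.
exact: (part2_core hP hnz hded piQ hpi hperm hcr hcross hz).
Qed.
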